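(* Let a shallow network with neurons $(V_0,V_1,V_2)$ and activation $\psi$ be given and let $\theta$ be a redundant parameter. Then there exist $\tilde V_1\subseteq V_1$ and an efficient parameter $\tilde\theta$ of the pruned network with neurons $(V_0,\tilde V_1,V_2)$ and activation $\psi$ such that $\Psi_\theta(x)=\Psi_{\tilde\theta}(x)$ for all $x\in\mathcal{X}$. Furthermore, if $\#V_2=1$ and $\theta$ is a critical point of a cost $J_{\mathbf m}(\vartheta)=\mathbb{E}_{\mathbf m}[\ell(\Psi_\vartheta(X),Y)]$ (for some loss $\ell$ and expectation $\mathbb{E}_{\mathbf m}$ induced by a distribution $\mathbb{P}_{\mathbf m}$, with $\ell$ and $\psi$ regular enough that derivatives may be moved into $\mathbb{E}_{\mathbf m}$), then $\tilde\theta$ is a critical point of the corresponding cost for the pruned network.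
   Context: Shallow network: finite pairwise disjoint $V_0,V_1,V_2$, activation $\psi$; $E=(V_0\times V_1)\cup(V_1\times V_2)$; parameters $\theta=(w,\beta)\in\mathbb{R}^E\times\mathbb{R}^{V_1\cup V_2}$; response $(\Psi_\theta(x))_l=\beta_l+\sum_{j\in V_1}\psi(\beta_j+\sum_{i\in V_0}x_iw_{ij})w_{jl}$; $w_{j\bullet}=(w_{jl})_{l\in V_2}$. $\mathcal{X}\subseteq\mathbb{R}^{V_0}$ is the support of the distribution of the input $X$. $\theta$ is efficient if (a) $w_{k\bullet}\neq0$ for all $k\in V_1$ and (b) the only $\lambda$ with $\lambda_\emptyset+\sum_{j\in V_1}\lambda_j\psi(\beta_j+\sum_ix_iw_{ij})=0$ for all $x\in\mathcal{X}$ is $\lambda\equiv0$; otherwise redundant. A network with no hidden neurons has only the output bias as parameter (and such a parameter is efficient). *)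

(* Defs.v *)
From HB Require Import structures.
From mathcomp Require Import all_boot all_order all_algebra.
From mathcomp Require Import all_classical all_reals all_analysis.
Set Implicit Arguments.
Unset Strict Implicit.
Unset Printing Implicit Defensive.
Import Order.TTheory GRing.Theory Num.Theory.
Import numFieldNormedType.Exports.
Local Open Scope classical_set_scope.
Local Open Scope ring_scope.

(* Shallow network with input neurons V0, hidden neurons H, output neurons V2.
   Pairwise disjointness of the neuron sets is automatic (distinct types).
   A parameter theta = (w, beta) in R^E x R^(H u V2), E = (V0 x H) u (H x V2),
   is encoded as a real function on the coordinate type
   (V0 * H) + (H * V2)  [weights w]  +  (H + V2)  [biases beta]. *)
Section Net.
Variables (R : realType) (V0 H V2 : finType).

Definition pcoord : Type := (((V0 * H) + (H * V2)) + (H + V2))%type.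
Definition param : Type := pcoord -> R.

Definition wIn (th : param) (i : V0) (j : H) : R := th (inl (inl (i, j))).
Definition wOut (th : param) (j : H) (l : V2) : R := th (inl (inr (j, l))).
Definition bHid (th : param) (j : H) : R := th (inr (inl j)).
Definition bOut (th : param) (l : V2) : R := th (inr (inr l)).

Definition response (psi : R -> R) (th : param) (x : V0 -> R) (l : V2) : R :=
  bOut th l + \sum_(j : H) psi (bHid th j + \sum_(i : V0) x i * wIn th i j) * wOut th j l.

(* efficiency w.r.t. the input set Xs; a network without hidden neurons
   is efficient by convention *)
Definition efficient (Xs : set (V0 -> R)) (psi : R -> R) (th : param) : Prop :=
  (#|H| = 0)%N \/
  ((forall k : H, exists l : V2, wOut th k l != 0) /\
   (forall (lam0 : R) (lam : H -> R),
      (forall x, Xs x ->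
         lam0 + \sum_(j : H) lam j * psi (bHid th j + \sum_(i : V0) x i * wIn th i j) = 0) ->
      lam0 = 0 /\ (forall j, lam j = 0))).

Definition redundant (Xs : set (V0 -> R)) (psi : R -> R) (th : param) : Prop :=
  ~ efficient Xs psi th.

Definition shift (th : param) (k : pcoord) (t : R) : param :=
  fun c => th c + (if c == k then t else 0).

Section Cost.
Variables (d : measure_display) (Omega : measurableType d)
  (Pm : probability Omega R) (Ty : Type) (loss : (V2 -> R) -> Ty -> R)
  (X : Omega -> V0 -> R) (Y : Omega -> Ty) (psi : R -> R).

Definition cost (th : param) : R :=
  Rintegral Pm setT (fun w => loss (response psi th (X w)) (Y w)).

Definition critical (th : param) : Prop :=
  forall k : pcoord,
    derivable (fun t => cost (shift th k t)) 0 1 /\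
    derive1 (fun t => cost (shift th k t)) 0 = 0.

Definition lossline (th : param) (k : pcoord) (w : Omega) : R -> R :=
  fun t => loss (response psi (shift th k t) (X w)) (Y w).

Definition deriv_interchange (th : param) (k : pcoord) : Prop :=
  Pm.-integrable setT (fun w => (loss (response psi th (X w)) (Y w))%:E) /\
  (forall w, derivable (lossline th k w) 0 1) /\
  Pm.-integrable setT (fun w => (derive1 (lossline th k w) 0)%:E) /\
  derivable (fun t => cost (shift th k t)) 0 1 /\
  derive1 (fun t => cost (shift th k t)) 0
    = Rintegral Pm setT (fun w => derive1 (lossline th k w) 0).
End Cost.
End Net.

(* support of the law of the input X : Omega -> R^V0 under P
   (w.r.t. the Euclidean = product topology on R^V0, written with sup-balls) *)
Definition input_support (R : realType) (V0 : finType) (d : measure_display)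
  (Omega : measurableType d) (P : probability Omega R) (X : Omega -> V0 -> R)
  : set (V0 -> R) :=
  [set x | forall e : R, (0 < e)%R ->
     (0%E < P [set w | forall i : V0, `|X w i - x i| < e]%R)%E].

(* Main.v *)
Require Import Defs.
From HB Require Import structures.
From mathcomp Require Import all_boot all_order all_algebra.
From mathcomp Require Import all_classical all_reals all_analysis.
From mathcomp Require Import ring.
Import Order.TTheory GRing.Theory Num.Theory.
Import numFieldNormedType.Exports.
Local Open Scope classical_set_scope.
Local Open Scope ring_scope.

Section Aux.
Variables (R : realType) (d : measure_display) (Omega : measurableType d)
  (Pm : probability Omega R).

Lemma Rintegral_ae (f g : Omega -> R) :
  Pm.-integrable setT (EFin \o f) -> Pm.-integrable setT (EFin \o g) ->
  {ae Pm, forall w, f w = g w} ->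
  Rintegral Pm setT f = Rintegral Pm setT g.
Proof.
move=> intf intg ae; rewrite /Rintegral; congr fine.
apply: ae_eq_integral => //.
- exact: measurable_int intf.
- exact: measurable_int intg.
- apply: filterS ae => w /= -> _; done.
Qed.

Lemma ae_false (P : Omega -> Prop) : (forall w, ~ P w) -> ~ {ae Pm, forall w, P w}.
Proof.
move=> nP hae.
have [B [mB PB0 sB]] : Pm.-negligible (~` [set w | P w]) := hae.
have BT : B = setT by apply/seteqP; split => // w _; apply: sB => /=; apply: nP.
move: PB0; rewrite BT probability_setT => /eqP. by rewrite onee_eq0.
Qed.

Variables (V0 V2 : finType) (Ty : Type) (loss : (V2 -> R) -> Ty -> R)
  (X : Omega -> V0 -> R) (Y : Omega -> Ty) (psi : R -> R).

Lemma crit_transfer (H H1 : finType) (th : param R V0 H V2) (th1 : param R V0 H1 V2)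
  (k : pcoord V0 H V2) (k1 : pcoord V0 H1 V2) (c : R) :
  deriv_interchange Pm loss X Y psi th k ->
  deriv_interchange Pm loss X Y psi th1 k1 ->
  {ae Pm, forall w, derive1 (lossline loss X Y psi th1 k1 w) 0 =
                    c * derive1 (lossline loss X Y psi th k w) 0} ->
  derive1 (fun t => cost Pm loss X Y psi (Defs.shift th k t)) 0 = 0 ->
  derive1 (fun t => cost Pm loss X Y psi (Defs.shift th1 k1 t)) 0 = 0.
Proof.
move=> [_ [_ [i0 [_ e0]]]] [_ [_ [i1 [_ e1]]]] ae h0.
rewrite e1 (@Rintegral_ae (fun w => derive1 (lossline loss X Y psi th1 k1 w) 0)
   (fun w => c * derive1 (lossline loss X Y psi th k w) 0) i1 _ ae); last first.
  exact: (integrableZl measurableT c i0).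
rewrite RintegralZl //.
by rewrite -e0 h0 mulr0.
Qed.
End Aux.

Section Deriv.
Variable R : realType.
Lemma derivable_compR (f g : R -> R) x : derivable f x 1 -> derivable g (f x) 1 ->
  derivable (fun t => g (f t)) x 1.
Proof.
move=> /derivable1_diffP df /derivable1_diffP dg; apply/derivable1_diffP.
exact: (differentiable_comp df dg).
Qed.

Lemma derivable_aff (p a x : R) : derivable (fun t : R => p + a * t) x 1.
Proof.
apply: derivableD; first exact: derivable_cst.
have := derivableZ (k:=a) (@derivable_id _ _ x 1).
by [].
Qed.

Lemma derivable_v (psi : R -> R) (p a W : R) : (forall z, derivable psi z 1) ->
  derivable (fun t => (psi (p + a * t) - psi p) * W) 0 1.
Proof.
move=> dpsi.
apply: (@derivable_compR (fun t => p + a * t) (fun s => (psi s - psi p) * W)).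
  exact: derivable_aff.
apply: derivableM; last exact: derivable_cst.
apply: derivableB; [exact: dpsi | exact: derivable_cst].
Qed.

Lemma derive_scale (h v : R -> R) (c : R) : v 0 = 0 -> derivable v 0 1 ->
  derivable h 0 1 ->
  derive1 (fun t => h (c * v t)) 0 = c * derive1 (fun t => h (v t)) 0.
Proof.
move=> v0 dv dh.
have dcv : derivable (fun t => c * v t) 0 1.
  apply: derivableM; [exact: derivable_cst| exact: dv].
have e1 := (@derive1_comp R (fun t => c * v t) h 0 dcv).
have e2 := (@derive1_comp R v h 0 dv).
rewrite /= v0 mulr0 in e1 e2.
rewrite -/(derive1 (h \o (fun t => c * v t)) 0).
rewrite (e1 dh) (e2 dh) derive1Ml //.
by rewrite mulrCA.
Qed.
End Deriv.
Section Net.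
Variables (R : realType) (V0 V2 : finType) (psi : R -> R).

Lemma sum_inj {H1 H : finType} (e : H1 -> H) (F : H -> R) : injective e ->
  (forall j, (forall i, e i != j) -> F j = 0) -> \sum_j F j = \sum_i F (e i).
Proof.
move=> ie hF.
rewrite (bigID [pred j | j \in (e @: [set: H1])%SET]) /=.
rewrite [X in _ + X]big1 ?addr0; last first.
  move=> j /negP Hj; apply: hF => i; apply/eqP => eij; apply: Hj.
  by rewrite -eij imset_f // inE.
rewrite big_imset /=; last by move=> ? ? _ _; apply: ie.
by apply: eq_bigl => i; rewrite inE.
Qed.

Definition preact {H : finType} (th : param R V0 H V2) (x : V0 -> R) (j : H) :=
  bHid th j + \sum_i x i * wIn th i j.

Definition mapc {H1 H : finType} (e : H1 -> H) (c : pcoord V0 H1 V2) : pcoord V0 H V2 :=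
  match c with
  | inl (inl (i, j)) => inl (inl (i, e j))
  | inl (inr (j, l)) => inl (inr (e j, l))
  | inr (inl j) => inr (inl (e j))
  | inr (inr l) => inr (inr l)
  end.

Lemma mapc_inj {H1 H : finType} (e : H1 -> H) : injective e -> injective (mapc e).
Proof.
move=> ie [[[i j]|[j l]]|[j|l]] [[[i' j']|[j' l']]|[j'|l']] //= [].
- by move=> -> /ie ->.
- by move=> /ie -> ->.
- by move=> /ie ->.
- by move=> ->.
Qed.

Definition restr {H1 H : finType} (e : H1 -> H) (th : param R V0 H V2) : param R V0 H1 V2 :=
  fun c => th (mapc e c).

Lemma shift_restr {H1 H : finType} (e : H1 -> H) th k1 t : injective e ->
  Defs.shift (restr e th) k1 t = restr e (Defs.shift th (mapc e k1) t).
Proof.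
move=> ie; apply/funext => c; rewrite /restr /Defs.shift.
by rewrite (inj_eq (@mapc_inj _ _ e ie)).
Qed.

Lemma response_restr {H1 H : finType} (e : H1 -> H) (th : param R V0 H V2) x l :
  injective e -> (forall j, (forall i, e i != j) -> wOut th j l = 0) ->
  response psi (restr e th) x l = response psi th x l.
Proof.
move=> ie hz; rewrite /response; congr (_ + _).
rewrite (@sum_inj _ _ e _ ie) //.
by move=> j /hz ->; rewrite mulr0.
Qed.

Lemma notimg_mapc {H1 H : finType} (e : H1 -> H) j l (k1 : pcoord V0 H1 V2) :
  (forall i, e i != j) -> (inl (inr (j, l)) : pcoord V0 H V2) != mapc e k1.
Proof.
move=> hj; case: k1 => [[[i j']|[j' l']]|[j'|l']] //=.
apply/eqP => -[ej _]; by move: (hj j'); rewrite ej eqxx.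
Qed.


Lemma eq_w {H : finType} (i i0 : V0) (j j0 : H) :
  (inl (inl (i, j)) == inl (inl (i0, j0)) :> pcoord V0 H V2) = (i == i0) && (j == j0).
Proof. by apply/eqP/andP => [[-> ->]|[/eqP-> /eqP->]]. Qed.

Lemma eq_b {H : finType} (j j0 : H) :
  (inr (inl j) == inr (inl j0) :> pcoord V0 H V2) = (j == j0).
Proof. by apply/eqP/eqP => [[->]|->]. Qed.

Lemma preact_shift_w {H : finType} (th : param R V0 H V2) x (i0 : V0) (j0 : H) t j :
 preact (Defs.shift th (inl (inl (i0, j0))) t) x j = preact th x j + (if j == j0 then x i0 * t else 0).
Proof.
rewrite /preact /bHid /wIn /Defs.shift /= addr0 -addrA; congr (_ + _).
under eq_bigr => i _ do rewrite eq_w mulrDr.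
rewrite big_split /=; congr (_ + _).
have [ej|ne] := eqVneq j j0.
  subst j.
  rewrite (bigD1 i0) //= !eqxx /= big1 ?addr0 // => i /negbTE -> /=; by rewrite mulr0.
by rewrite big1 // => i _; rewrite andbF mulr0.
Qed.

Lemma preact_shift_b {H : finType} (th : param R V0 H V2) x (j0 : H) t j :
 preact (Defs.shift th (inr (inl j0)) t) x j = preact th x j + (if j == j0 then t else 0).
Proof.
rewrite /preact /bHid /wIn /Defs.shift /= eq_b.
under eq_bigr => i _ do rewrite addr0.
ring.
Qed.

Lemma response_hid {H : finType} (th th' : param R V0 H V2) x l j0 d :
  (forall j, preact th' x j = preact th x j + (if j == j0 then d else 0)) ->
  (forall j, wOut th' j l = wOut th j l) -> bOut th' l = bOut th l ->
  response psi th' x l = response psi th x l +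
     (psi (preact th x j0 + d) - psi (preact th x j0)) * wOut th j0 l.
Proof.
move=> hp hw hb; rewrite /response hb -addrA; congr (_ + _).
have -> : \sum_j psi (bHid th' j + \sum_i x i * wIn th' i j) * wOut th' j l =
   \sum_j psi (preact th x j + (if j == j0 then d else 0)) * wOut th j l.
  by apply: eq_bigr => j _; rewrite -hp hw.
rewrite (bigD1 j0) //= [in RHS](bigD1 j0) //= eqxx.
rewrite (eq_bigr (fun j => psi (preact th x j) * wOut th j l)); last first.
  by move=> j /negbTE ->; rewrite addr0.
rewrite /preact; ring.
Qed.


Lemma sum_split {H1 H : finType} (e : H1 -> H) (js : H) (G : H -> R) :
  injective e -> (forall i, e i != js) -> (forall j, j != js -> exists i, e i = j) ->
  \sum_j G j = G js + \sum_i G (e i).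
Proof.
move=> ie hjs hsur; rewrite (bigD1 js) //=; congr (_ + _).
rewrite big_mkcond /= (@sum_inj _ _ e _ ie).
  by apply: eq_bigr => i _; rewrite hjs.
move=> j hj; case: ifP => // nj; case: (hsur j nj) => i ei.
by move: (hj i); rewrite ei eqxx.
Qed.

Section Prune.
Variables (H1 H : finType) (e : H1 -> H) (js : H).
Hypotheses (ie : injective e) (hjs : forall i, e i != js).

Definition prune (cc : H -> R) (c0 : R) (th : param R V0 H V2) : param R V0 H1 V2 :=
  fun c => th (mapc e c) +
    match c with
    | inl (inr (j, l)) => cc (e j) * th (inl (inr (js, l)))
    | inr (inr l) => c0 * th (inl (inr (js, l)))
    | _ => 0
    end.

Lemma shift_prune cc c0 th k1 t :
  Defs.shift (prune cc c0 th) k1 t = prune cc c0 (Defs.shift th (mapc e k1) t).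
Proof.
apply/funext => c; rewrite /prune /Defs.shift (inj_eq (@mapc_inj _ _ e ie)).
case: c => [[[i j]|[j l]]|[j|l]] /=; rewrite ?addr0 //;
  rewrite (negbTE (@notimg_mapc _ _ e js l k1 hjs)) addr0; ring.
Qed.

Lemma preact_prune cc c0 th x j : preact (prune cc c0 th) x j = preact th x (e j).
Proof.
rewrite /preact /bHid /wIn /prune /= addr0; congr (_ + _).
by apply: eq_bigr => i _; rewrite addr0.
Qed.

Lemma response_prune (lam0 : R) (lam : H -> R) th x l :
  (forall j, j != js -> exists i, e i = j) -> lam js != 0 ->
  lam0 + \sum_j lam j * psi (preact th x j) = 0 ->
  response psi (prune (fun j => - lam j / lam js) (- lam0 / lam js) th) x l =
  response psi th x l.
Proof.
move=> hsur hl rel.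
rewrite (@sum_split _ _ e js _ ie hjs hsur) in rel.
rewrite /response (@sum_split _ _ e js _ ie hjs hsur).
set A := \sum_i psi (bHid th (e i) + \sum_i0 x i0 * wIn th i0 (e i)) * wOut th (e i) l.
set B := \sum_i lam (e i) * psi (preact th x (e i)) in rel.
set P := psi (preact th x js) in rel.
have -> : \sum_j psi (bHid (prune (fun j => - lam j / lam js) (- lam0 / lam js) th) j +
         \sum_i x i * wIn (prune (fun j => - lam j / lam js) (- lam0 / lam js) th) i j) *
      wOut (prune (fun j => - lam j / lam js) (- lam0 / lam js) th) j l
   = A + B * (- wOut th js l / lam js).
  rewrite /A /B mulr_suml -big_split /=; apply: eq_bigr => i _.
  have := preact_prune (fun j => - lam j / lam js) (- lam0 / lam js) th x i.
  rewrite /preact => ->.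
  rewrite /wOut /prune /=; field; exact: hl.
have hP : P = - (lam0 + B) / lam js.
  apply: (mulfI hl); rewrite mulrCA mulfV // mulr1.
  by rewrite -[RHS]addr0 -rel; ring.
rewrite /bOut /prune /= -/(preact th x js) -/P hP /wOut; field; exact: hl.
Qed.
End Prune.

Lemma resp_shift_w {H : finType} (th : param R V0 H V2) x l i j t :
  response psi (Defs.shift th (inl (inl (i, j))) t) x l = response psi th x l +
    (psi (preact th x j + x i * t) - psi (preact th x j)) * wOut th j l.
Proof.
apply: response_hid.
- exact: preact_shift_w.
- by move=> j'; rewrite /wOut /Defs.shift /= addr0.
- by rewrite /bOut /Defs.shift /= addr0.
Qed.

Lemma resp_shift_b {H : finType} (th : param R V0 H V2) x l j t :
  response psi (Defs.shift th (inr (inl j)) t) x l = response psi th x l +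
    (psi (preact th x j + (fun _ => 1) x * t) - psi (preact th x j)) * wOut th j l.
Proof.
apply: response_hid.
- by move=> j'; rewrite mul1r; exact: preact_shift_b.
- by move=> j'; rewrite /wOut /Defs.shift /= addr0.
- by rewrite /bOut /Defs.shift /= addr0.
Qed.

Lemma preact_shift_o1 {H : finType} (th : param R V0 H V2) x j0 l0 t :
  preact (Defs.shift th (inl (inr (j0, l0))) t) x = preact th x.
Proof.
apply/funext => j; rewrite /preact /bHid /wIn /Defs.shift /= addr0; congr (_ + _).
by apply: eq_bigr => i _; rewrite addr0.
Qed.

Lemma preact_shift_o2 {H : finType} (th : param R V0 H V2) x l0 t :
  preact (Defs.shift th (inr (inr l0)) t) x = preact th x.
Proof.
apply/funext => j; rewrite /preact /bHid /wIn /Defs.shift /= addr0; congr (_ + _).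
by apply: eq_bigr => i _; rewrite addr0.
Qed.

Section Crit.
Variables (d : measure_display) (Omega : measurableType d) (Pm : probability Omega R)
  (Ty : Type) (loss : (V2 -> R) -> Ty -> R) (X : Omega -> V0 -> R) (Y : Omega -> Ty).
Hypothesis hint : forall (H : finType) (vth : param R V0 H V2) (k : pcoord V0 H V2),
  deriv_interchange Pm loss X Y psi vth k.

Lemma crit_restr {H1 H : finType} (e : H1 -> H) (th : param R V0 H V2) :
  injective e -> (forall j, (forall i, e i != j) -> forall l, wOut th j l = 0) ->
  critical Pm loss X Y psi th -> critical Pm loss X Y psi (restr e th).
Proof.
move=> ie hz hc k1; split; first by case: (@hint _ (restr e th) k1) => _ [_ [_ []]].
apply: (@crit_transfer R d Omega Pm V0 V2 Ty loss X Y psi H H1 th (restr e th)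
   (mapc e k1) k1 1); [exact: hint|exact: hint| |exact: (proj2 (hc _))].
apply: aeW => w.
have -> : lossline loss X Y psi (restr e th) k1 w = lossline loss X Y psi th (mapc e k1) w.
  apply/funext => t; rewrite /lossline shift_restr //; congr (loss _ _); apply/funext => l.
  apply: response_restr => // j hj.
  by rewrite /wOut /Defs.shift (negbTE (@notimg_mapc _ _ e j l k1 hj)) addr0; exact: hz.
by rewrite mul1r.
Qed.

Lemma hid_rel {Ha Hb : finType} (tha : param R V0 Ha V2) (thb : param R V0 Hb V2)
  ka kb ja jb (a : (V0 -> R) -> R) :
  (#|V2| = 1)%N -> (forall z : R, derivable psi z 1) ->
  (forall (y : Ty) (o : V2 -> R), derivable (fun t : R => loss (fun l => o l + t) y) 0 1) ->
  (forall t x l, response psi (Defs.shift tha ka t) x l = response psi tha x l +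
    (psi (preact tha x ja + a x * t) - psi (preact tha x ja)) * wOut tha ja l) ->
  (forall t x l, response psi (Defs.shift thb kb t) x l = response psi thb x l +
    (psi (preact thb x jb + a x * t) - psi (preact thb x jb)) * wOut thb jb l) ->
  (forall x, preact tha x ja = preact thb x jb) ->
  forall l0, wOut thb jb l0 != 0 ->
  forall w, (forall l, response psi tha (X w) l = response psi thb (X w) l) ->
  derive1 (lossline loss X Y psi tha ka w) 0 =
    (wOut tha ja l0 / wOut thb jb l0) * derive1 (lossline loss X Y psi thb kb w) 0.
Proof.
move=> hV2 hpsi hloss ha hb hpre l0 hW w hresp.
have l1 : forall l : V2, l = l0.
  move: hV2 => /eqP; rewrite eqn_leq => /andP[/fintype_le1P h _] l; exact: h.
set x := X w.
set p := preact thb x jb.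
set W := wOut thb jb l0.
set c := wOut tha ja l0 / W.
set h := fun s => loss (fun l => response psi thb x l + s) (Y w).
set v := fun t => (psi (p + a x * t) - psi p) * W.
have La : lossline loss X Y psi tha ka w = fun t => h (c * v t).
  apply/funext => t; rewrite /lossline /h; congr (loss _ _); apply/funext => l.
  rewrite ha hresp hpre (l1 l) /c /v -/x -/p /W; field; exact: hW.
have Lb : lossline loss X Y psi thb kb w = fun t => h (v t).
  apply/funext => t; rewrite /lossline /h; congr (loss _ _); apply/funext => l.
  by rewrite hb (l1 l) /v -/x -/p.
rewrite La Lb; apply: derive_scale.
- by rewrite /v mulr0 addr0 subrr mul0r.
- exact: derivable_v.
- exact: hloss.
Qed.

Lemma crit_prune {H1 H : finType} (e : H1 -> H) (js : H) (Xs : set (V0 -> R)) lam0 lam th :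
  injective e -> (forall i, e i != js) -> (forall j, j != js -> exists i, e i = j) ->
  lam js != 0 ->
  (forall x, Xs x -> lam0 + \sum_j lam j * psi (preact th x j) = 0) ->
  (forall j, exists l, wOut th j l != 0) ->
  (#|V2| = 1)%N -> {ae Pm, forall w, Xs (X w)} ->
  (forall z : R, derivable psi z 1) ->
  (forall (y : Ty) (o : V2 -> R), derivable (fun t : R => loss (fun l => o l + t) y) 0 1) ->
  critical Pm loss X Y psi th ->
  critical Pm loss X Y psi (@prune _ _ e js (fun j => - lam j / lam js) (- lam0 / lam js) th).
Proof.
move=> ie hjs hsur hl hrel hw hV2 hae hpsi hloss hc k1.
set P' := @prune _ _ e js (fun j => - lam j / lam js) (- lam0 / lam js) th.
split; first by case: (@hint _ P' k1) => _ [_ [_ []]].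
have hresp : forall x, Xs x -> forall l, response psi P' x l = response psi th x l.
  by move=> x hx l; apply: response_prune => //; exact: hrel.
have out : forall k, (forall t x, preact (Defs.shift th (mapc e k) t) x = preact th x) ->
    derive1 (fun t => cost Pm loss X Y psi (Defs.shift P' k t)) 0 = 0.
  move=> k hpre.
  apply: (@crit_transfer R d Omega Pm V0 V2 Ty loss X Y psi H H1 th P' (mapc e k) k 1);
    [exact: hint|exact: hint| |exact: (proj2 (hc _))].
  apply: filterS hae => w hXw.
  have -> : lossline loss X Y psi P' k w = lossline loss X Y psi th (mapc e k) w.
    apply/funext => t; rewrite /lossline /P' (@shift_prune _ _ e js ie hjs).
    congr (loss _ _); apply/funext => l.
    apply: response_prune => //; rewrite hpre; exact: hrel.
  by rewrite mul1r.
case: k1 => [[[i j]|[j l]]|[j|l]].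
- case: (hw (e j)) => l0 hl0.
  apply: (@crit_transfer R d Omega Pm V0 V2 Ty loss X Y psi H H1 th P'
     (mapc e (inl (inl (i, j)))) (inl (inl (i, j))) (wOut P' j l0 / wOut th (e j) l0));
    [exact: hint|exact: hint| |exact: (proj2 (hc _))].
  apply: filterS hae => w hXw.
  apply: (@hid_rel _ _ P' th _ _ j (e j) (fun x => x i)) => //.
  + by move=> t x l; rewrite resp_shift_w.
  + by move=> t x l; rewrite /= resp_shift_w.
  + by move=> x; rewrite preact_prune.
  + by move=> l; apply: hresp.
- apply: out => t x; exact: preact_shift_o1.
- case: (hw (e j)) => l0 hl0.
  apply: (@crit_transfer R d Omega Pm V0 V2 Ty loss X Y psi H H1 th P'
     (mapc e (inr (inl j))) (inr (inl j)) (wOut P' j l0 / wOut th (e j) l0));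
    [exact: hint|exact: hint| |exact: (proj2 (hc _))].
  apply: filterS hae => w hXw.
  apply: (@hid_rel _ _ P' th _ _ j (e j) (fun x => 1)) => //.
  + by move=> t x l; rewrite resp_shift_b.
  + by move=> t x l; rewrite /= resp_shift_b.
  + by move=> x; rewrite preact_prune.
  + by move=> l; apply: hresp.
- apply: out => t x; exact: preact_shift_o2.
Qed.
End Crit.

Lemma eff_restr {H1 H : finType} (g : H1 -> H) (f : H -> H1) (Xs : set (V0 -> R))
  (th : param R V0 H V2) :
  cancel g f -> cancel f g -> efficient Xs psi th -> efficient Xs psi (restr g th).
Proof.
move=> gK fK [h0|[hw hrel]].
  by left; rewrite (bij_eq_card (Bijective gK fK)).
right; split.
  by move=> k; case: (hw (g k)) => l hl; exists l.
move=> lam0 lam hr.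
have [] := hrel lam0 (fun i => lam (f i)).
  move=> x hx; rewrite -[RHS](hr x hx); congr (_ + _).
  etransitivity; first apply: (@sum_inj _ _ g _ (can_inj gK)).
    by move=> j hj; move: (hj (f j)); rewrite fK eqxx.
  by apply: eq_bigr => j _; rewrite gK.
move=> -> hl; split => // j; rewrite -(gK j); exact: hl.
Qed.

Section Main.
Variables (d : measure_display) (Omega : measurableType d) (X : Omega -> V0 -> R)
  (Xs : set (V0 -> R)).

Definition CritT {H H' : finType} (th : param R V0 H V2) (th' : param R V0 H' V2) :=
  (#|V2| = 1)%N ->
      forall (Ty : Type) (loss : (V2 -> R) -> Ty -> R)
             (Pm : probability Omega R) (Y : Omega -> Ty),
      {ae Pm, forall w, Xs (X w)} ->
      (forall z : R, derivable psi z 1) ->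
      (forall (y : Ty) (o : V2 -> R),
         derivable (fun t : R => loss (fun l => o l + t) y) 0 1) ->
      (forall (H : finType) (vth : param R V0 H V2) (k : pcoord V0 H V2),
         deriv_interchange Pm loss X Y psi vth k) ->
      critical Pm loss X Y psi th ->
      critical Pm loss X Y psi th'.

Lemma card_sig1 {H : finType} (k : H) : (#|H| != 0)%N -> (#|{: {j : H | j != k}}| < #|H|)%N.
Proof.
move=> hH; rewrite card_sig.
have -> : #|[pred x | x != k]| = #|predC1 k| by apply: eq_card.
rewrite cardC1; case: #|H| hH => //.
Qed.

Lemma step {H : finType} (th : param R V0 H V2) : (exists x0, Xs x0) ->
  ~ efficient Xs psi th ->
  exists (H1 : finType) (e : H1 -> H) (th1 : param R V0 H1 V2),
    injective e /\ (#|H1| < #|H|)%N /\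
    (forall x, Xs x -> forall l, response psi th x l = response psi th1 x l) /\
    CritT th th1.
Proof.
move=> [x0 hx0] ne.
have hH : (#|H| != 0)%N by apply/eqP => h; apply: ne; left.
case: (pselect (exists k, forall l, wOut th k l = 0)) => [[k hk]|nk].
  have hz : forall j, (forall i : {j : H | j != k}, val i != j) -> forall l, wOut th j l = 0.
    move=> j hj l; have [ejk|njk] := eqVneq j k; first by rewrite ejk; exact: hk.
    by move: (hj (exist _ j njk)); rewrite eqxx.
  exists {j : H | j != k}, val, (restr val th); split; first exact: val_inj.
  split; first exact: card_sig1.
  split.
    by move=> x hx l; symmetry; apply: (@response_restr _ _ val th x l val_inj (fun j hj => hz j hj l)).
  move=> hV2 Ty loss Pm Y hae hpsi hloss hint hc.
  exact: (@crit_restr _ _ Pm _ loss X Y hint _ _ val th val_inj hz hc).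
have hw : forall j, exists l, wOut th j l != 0.
  move=> j; apply: contrapT => hn; apply: nk; exists j => l.
  case: (eqVneq (wOut th j l) 0) => // h; exfalso; apply: hn; by exists l.
have : ~ (forall lam0 lam, (forall x, Xs x ->
      lam0 + \sum_j lam j * psi (bHid th j + \sum_i x i * wIn th i j) = 0) ->
      lam0 = 0 /\ (forall j, lam j = 0)).
  by move=> hr; apply: ne; right; split.
move=> /existsNP [lam0 /existsNP [lam /not_implyP [hrel hnz]]].
have [js hl] : exists js, lam js != 0.
  apply: contrapT => hn; apply: hnz.
  have hz : forall j, lam j = 0.
    move=> j; case: (eqVneq (lam j) 0) => // h; exfalso; apply: hn; by exists j.
  split => //.
  have := hrel x0 hx0; rewrite big1 ?addr0 // => j _; by rewrite hz mul0r.
have hsur : forall j, j != js -> exists i : {j : H | j != js}, val i = j.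
  by move=> j hj; exists (exist _ j hj).
have hjs : forall i : {j : H | j != js}, val i != js by move=> [i hi].
exists {j : H | j != js}, val,
  (@prune _ _ val js (fun j => - lam j / lam js) (- lam0 / lam js) th).
split; first exact: val_inj.
split; first exact: card_sig1.
split.
  move=> x hx l; symmetry.
  exact: (@response_prune _ _ val js val_inj hjs lam0 lam th x l hsur hl (hrel x hx)).
move=> hV2 Ty loss Pm Y hae hpsi hloss hint hc.
exact: (@crit_prune _ _ Pm _ loss X Y hint _ _ val js Xs lam0 lam th val_inj hjs hsur hl
  hrel hw hV2 hae hpsi hloss hc).
Qed.

Lemma main_ind n : forall (H : finType) (th : param R V0 H V2), (#|H| <= n)%N ->
  (exists x0, Xs x0) ->
  exists (H' : finType) (e : H' -> H) (th' : param R V0 H' V2),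
    injective e /\ efficient Xs psi th' /\
    (forall x, Xs x -> forall l, response psi th x l = response psi th' x l) /\
    CritT th th'.
Proof.
elim: n => [|n IH] H th hn hx.
  exists H, id, th; split => //; split; last by split.
  by left; apply/eqP; rewrite -leqn0.
case: (pselect (efficient Xs psi th)) => he.
  by exists H, id, th; split => //; split => //; split.
have [H1 [e1 [th1 [ie1 [hc1 [hr1 hC1]]]]]] := step th hx he.
have [H' [e' [th' [ie' [he' [hr' hC']]]]]] := IH H1 th1 (ltnSE (leq_trans hc1 hn)) hx.
exists H', (fun i => e1 (e' i)), th'; split.
  by move=> a b /ie1 /ie'.
split => //; split.
  by move=> x hx' l; rewrite hr1 // hr'.
move=> hV2 Ty loss Pm Y hae hpsi hloss hint hc.
by apply: (hC' hV2 Ty loss Pm Y hae hpsi hloss hint); apply: (hC1 hV2 Ty loss Pm Y hae hpsi hloss hint).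
Qed.
End Main.
End Net.

Theorem proposition6p5 (R : realType) (V0 V1 V2 : finType) (psi : R -> R)
  (d : measure_display) (Omega : measurableType d) (P : probability Omega R)
  (X : Omega -> V0 -> R)
  (hX : forall i : V0, measurable_fun setT (fun w => X w i))
  (th : param R V0 V1 V2)
  (hred : redundant (input_support P X) psi th) :
  exists (S : {set V1}) (tth : param R V0 {j : V1 | j \in S} V2),
    efficient (input_support P X) psi tth /\
    (forall x, input_support P X x ->
       forall l : V2, response psi th x l = response psi tth x l) /\
    ((#|V2| = 1)%N ->
      forall (Ty : Type) (loss : (V2 -> R) -> Ty -> R)
             (Pm : probability Omega R) (Y : Omega -> Ty),
      {ae Pm, forall w, input_support P X (X w)} ->
      (forall z : R, derivable psi z 1) ->
      (forall (y : Ty) (o : V2 -> R),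
         derivable (fun t : R => loss (fun l => o l + t) y) 0 1) ->
      (forall (H : finType) (vth : param R V0 H V2) (k : pcoord V0 H V2),
         deriv_interchange Pm loss X Y psi vth k) ->
      critical Pm loss X Y psi th ->
      critical Pm loss X Y psi tth).
Proof.
case: (pselect (exists x0, input_support P X x0)) => [hx|nx]; last first.
  exists [set j : V1 | false]%SET, (fun _ => 0).
  split.
    by left; rewrite card_sig; apply: eq_card0 => j; rewrite !inE.
  split.
    by move=> x hx; exfalso; apply: nx; exists x.
  move=> hV2 Ty loss Pm Y hae; exfalso.
  apply: (@ae_false R d Omega Pm (fun w => input_support P X (X w))) hae.
  by move=> w hw; apply: nx; exists (X w).
have [H' [e [th' [ie [he [hr hC]]]]]] :=
  @main_ind R V0 V2 psi d Omega X (input_support P X) #|V1| V1 th (leqnn _) hx.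
pose S := [set j | j \in codom e]%SET.
have hS : forall s : {j : V1 | j \in S}, val s \in codom e.
  by move=> [j hj] /=; move: hj; rewrite inE.
pose g := fun s : {j : V1 | j \in S} => iinv (hS s).
have hf : forall i, e i \in S by move=> i; rewrite inE codom_f.
pose f := fun i : H' => (exist _ (e i) (hf i) : {j : V1 | j \in S}).
have gK : cancel g f.
  by move=> s; apply: val_inj => /=; rewrite /g f_iinv.
have fK : cancel f g.
  by move=> i; apply: ie; rewrite /g f_iinv.
have hz : forall l j, (forall i, g i != j) -> wOut th' j l = 0.
  by move=> l j hj; move: (hj (f j)); rewrite fK eqxx.
exists S, (@restr R V0 V2 _ _ g th').
split; first exact: (@eff_restr R V0 V2 psi _ _ g f _ th' gK fK he).
split.
  by move=> x hx' l; rewrite hr // (@response_restr R V0 V2 psi _ _ g th' x l (can_inj gK) (hz l)).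
move=> hV2 Ty loss Pm Y hae hpsi hloss hint hc.
apply: (@crit_restr _ _ _ _ _ _ Pm _ loss X Y hint _ _ g th' (can_inj gK)).
  by move=> j hj l; apply: hz.
exact: (hC hV2 Ty loss Pm Y hae hpsi hloss hint hc).
Qed.
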